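(* Let $\varepsilon:H_n\to S_n$ be defined on generators by $\varepsilon(x_{i,j})=\varepsilon(x_{j,i})=(\tau_{i+1}\cdots\tau_{j-1})^{-1}\,\tau_i\,(\tau_{i+1}\cdots\tau_{j-1})$ for $1\le i<j\le n$, where $\tau_k=(k\ k{+}1)\in S_n$. Then $\varepsilon$ is a well-defined homomorphism, the group $EP_n$ is isomorphic to $\ker\varepsilon$, and the normal closure in $VB_n$ of the pure braid group $P_n$ is properly contained in $EP_n$.
   Context: The virtual braid group $VB_n$ is the group with generators $\sigma_i,\rho_i$ ($i=1,\dots,n-1$) and defining relations: $\sigma_i\sigma_{i+1}\sigma_i=\sigma_{i+1}\sigma_i\sigma_{i+1}$ ($1\le i\le n-2$); $\sigma_i\sigma_j=\sigma_j\sigma_i$ ($|i-j|\geq 2$); $\rho_i\rho_{i+1}\rho_i=\rho_{i+1}\rho_i\rho_{i+1}$ ($1\le i\le n-2$); $\rho_i\rho_j=\rho_j\rho_i$ ($|i-j|\geq 2$); $\rho_i^2=1$; $\sigma_i\rho_j=\rho_j\sigma_i$ ($|i-j|\geq2$); $\rho_i\rho_{i+1}\sigma_i=\sigma_{i+1}\rho_i\rho_{i+1}$ ($1\le i\le n-2$). The braid group $B_n$ embeds in $VB_n$ via $\sigma_i\mapsto\sigma_i$, and $P_n\subset B_n$ is the pure braid group (kernel of $B_n\to S_n$, $\sigma_i\mapsto(i\ i{+}1)$). $H_n$ is the normal closure of $\langle\sigma_1,\dots,\sigma_{n-1}\rangle$ in $VB_n$; it is generated by $x_{i,i+1}=\sigma_i$,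 $x_{i,j}=\rho_{j-1}\cdots\rho_{i+1}\sigma_i\rho_{i+1}\cdots\rho_{j-1}$ ($1\le i<j-1\le n-1$), $x_{i+1,i}=\rho_i\sigma_i\rho_i$, $x_{j,i}=\rho_{j-1}\cdots\rho_{i+1}\rho_i\sigma_i\rho_i\rho_{i+1}\cdots\rho_{j-1}$ ($1\le i<j-1\le n-1$). Let $M_n=S_n\rtimes S_n$ with the second factor acting on the first by conjugation, $s_i$ (resp. $t_i$) the transposition $(i\ i{+}1)$ in the first (resp. second) factor, and $\chi:VB_n\to M_n$ the homomorphism $\chi(\sigma_i)=s_i$, $\chi(\rho_i)=t_i$. The extended pure braid group is $EP_n=\ker\chi$. *)

(* Defs.v *)
(* Virtual braid groups as finitely presented groups:
   elements of VB_n are words in the generators sigma_i, rho_i (1 <= i <= n-1)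
   and their inverses, modulo the congruence generated by the defining
   relations and free cancellation. *)
From mathcomp Require Import all_boot all_fingroup.

Set Implicit Arguments.
Unset Strict Implicit.
Unset Printing Implicit Defensive.

Inductive gen := Sig of nat | Rho of nat.

Definition gidx (g : gen) : nat := match g with Sig i => i | Rho i => i end.

(* a letter: a generator together with a flag (true = inverse) *)
Definition letter := (gen * bool)%type.
Definition word := seq letter.

Definition linv (l : letter) : letter := (l.1, ~~ l.2).
Definition winv (w : word) : word := rev (map linv w).

Definition s (i : nat) : letter := (Sig i, false).
Definition r (i : nat) : letter := (Rho i, false).

Definition valid (n : nat) (w : word) : bool :=
  all (fun l => (0 < gidx l.1) && (gidx l.1 < n)) w.

Definition far (i j : nat) : bool := (i.+1 < j) || (j.+1 < i).

Inductive vbrel (n : nat) : word -> word -> Prop :=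
| rel_s3 i : 0 < i -> i.+1 < n ->
    vbrel n [:: s i; s i.+1; s i] [:: s i.+1; s i; s i.+1]
| rel_scomm i j : 0 < i < n -> 0 < j < n -> far i j ->
    vbrel n [:: s i; s j] [:: s j; s i]
| rel_r3 i : 0 < i -> i.+1 < n ->
    vbrel n [:: r i; r i.+1; r i] [:: r i.+1; r i; r i.+1]
| rel_rcomm i j : 0 < i < n -> 0 < j < n -> far i j ->
    vbrel n [:: r i; r j] [:: r j; r i]
| rel_rr i : 0 < i < n -> vbrel n [:: r i; r i] [::]
| rel_srcomm i j : 0 < i < n -> 0 < j < n -> far i j ->
    vbrel n [:: s i; r j] [:: r j; s i]
| rel_mixed i : 0 < i -> i.+1 < n ->
    vbrel n [:: r i; r i.+1; s i] [:: s i.+1; r i; r i.+1].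

Inductive wequiv (n : nat) : word -> word -> Prop :=
| we_rel u v : vbrel n u v -> wequiv n u v
| we_free x : wequiv n [:: x; linv x] [::]
| we_refl u : wequiv n u u
| we_sym u v : wequiv n u v -> wequiv n v u
| we_trans u v w : wequiv n u v -> wequiv n v w -> wequiv n u w
| we_cat u u' v v' : wequiv n u u' -> wequiv n v v' -> wequiv n (u ++ v) (u' ++ v').

Inductive prods (S : word -> Prop) : word -> Prop :=
| pr_nil : prods S [::]
| pr_gen w : S w -> prods S w
| pr_inv w : S w -> prods S (winv w)
| pr_cat u v : prods S u -> prods S v -> prods S (u ++ v).

Definition subgroup_gen (n : nat) (S : word -> Prop) : word -> Prop :=
  fun w => valid n w /\ exists w', prods S w' /\ wequiv n w w'.

Definition normal_closure (n : nat) (S : word -> Prop) : word -> Prop :=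
  subgroup_gen n (fun w => exists c t, valid n c /\ S t /\ w = c ++ t ++ winv c).

Definition subgroup_iso (n : nat) (A B : word -> Prop) : Prop :=
  exists f : word -> word,
    [/\ (forall w, A w -> B (f w)),
        (forall u v, A u -> A v -> wequiv n u v -> wequiv n (f u) (f v)),
        (forall u v, A u -> A v -> wequiv n (f (u ++ v)) (f u ++ f v)),
        (forall u v, A u -> A v -> wequiv n (f u) (f v) -> wequiv n u v)
      & (forall w', B w' -> exists w, A w /\ wequiv n (f w) w')].

(* tau n k = the transposition (k k+1) in S_n, points numbered 1..n
   (i.e. ordinals k-1 and k); meaningful for 1 <= k <= n-1 *)
Definition tau (n k : nat) : 'S_n :=
  match n as m return 'S_m with
  | 0 => 1%g
  | m.+1 => tperm (inord k.-1 : 'I_m.+1) (inord k)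
  end.

(* the semidirect product M_n = S_n x| S_n, second factor acting on the
   first by conjugation: (a,h)(b,k) = (a * (h b h^-1), h k) *)
Definition Mn (n : nat) := ('S_n * 'S_n)%type.
Definition mmul (n : nat) (x y : Mn n) : Mn n :=
  ((x.1 * (x.2 * y.1 * x.2^-1)) , x.2 * y.2)%g.
Definition mone (n : nat) : Mn n := (1%g, 1%g).
Definition minv (n : nat) (x : Mn n) : Mn n :=
  ((x.2^-1 * x.1^-1 * x.2), x.2^-1)%g.

Definition chi_gen (n : nat) (g : gen) : Mn n :=
  match g with Sig i => (tau n i, 1%g) | Rho i => (1%g, tau n i) end.
Definition chi_letter (n : nat) (l : letter) : Mn n :=
  if l.2 then minv (chi_gen n l.1) else chi_gen n l.1.
Definition chi (n : nat) (w : word) : Mn n :=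
  foldr (fun l acc => mmul (chi_letter n l) acc) (mone n) w.

Definition EP (n : nat) : word -> Prop :=
  fun w => valid n w /\ chi n w = mone n.

Definition H (n : nat) : word -> Prop :=
  normal_closure n (fun w => exists i, 0 < i < n /\ w = [:: s i]).

(* x_{i,j} = rho_{j-1}..rho_{i+1} sigma_i rho_{i+1}..rho_{j-1}   (i < j) *)
Definition x_up (i j : nat) : word :=
  map r (rev (iota i.+1 (j - i.+1))) ++ [:: s i] ++ map r (iota i.+1 (j - i.+1)).
(* x_{j,i} = rho_{j-1}..rho_i sigma_i rho_i..rho_{j-1}   (i < j) *)
Definition x_down (i j : nat) : word :=
  map r (rev (iota i (j - i))) ++ [:: s i] ++ map r (iota i (j - i)).

Definition tprod (n : nat) (l : seq nat) : 'S_n :=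
  foldr (fun k acc => (tau n k * acc)%g) 1%g l.
Definition eps_val (n i j : nat) : 'S_n :=
  ((tprod n (iota i.+1 (j - i.+1)))^-1 * tau n i * tprod n (iota i.+1 (j - i.+1)))%g.

Definition sigma_word (w : word) : bool :=
  all (fun l => if l.1 is Sig _ then true else false) w.
Definition bperm (n : nat) (w : word) : 'S_n :=
  foldr (fun l acc => ((if l.2 then (tau n (gidx l.1))^-1 else tau n (gidx l.1)) * acc)%g)
        1%g w.
Definition Pn (n : nat) : word -> Prop :=
  fun w => valid n w /\ exists b, valid n b /\ sigma_word b /\ bperm n b = 1%g /\ wequiv n w b.

(* Main.v *)
Require Import Defs.
From mathcomp Require Import all_boot all_fingroup zify.
Set Implicit Arguments. Unset Strict Implicit. Unset Printing Implicit Defensive.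
Open Scope group_scope.

Lemma tauK n k : tau n k * tau n k = 1.
Proof. by case: n => [|n] /=; rewrite ?mulg1 ?tperm2. Qed.

Lemma tauV n k : (tau n k)^-1 = tau n k.
Proof. by apply/eqP; rewrite eq_invg_mul tauK. Qed.

Lemma inord_inj n' x y : x < n'.+1 -> y < n'.+1 -> (inord x : 'I_n'.+1) = inord y -> x = y.
Proof. by move=> hx hy /(congr1 (@nat_of_ord _)); rewrite !inordK. Qed.

Lemma inord_neq n' x y : x < n'.+1 -> y < n'.+1 -> x != y -> (inord x : 'I_n'.+1) != inord y.
Proof. by move=> hx hy; apply: contra => /eqP /inord_inj -> //. Qed.

Lemma tau_braid n i : 0 < i -> i.+1 < n ->
  tau n i * tau n i.+1 * tau n i = tau n i.+1 * tau n i * tau n i.+1.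
Proof.
case: n => [|n] //= hi hn.
set a : 'I_n.+1 := inord i.-1; set b : 'I_n.+1 := inord i; set c : 'I_n.+1 := inord i.+1.
have ab : a != b by apply: inord_neq; rewrite ?prednK //; try lia.
have ac : a != c by apply: inord_neq; try lia.
have bc : b != c by apply: inord_neq; try lia.
have e1 : tperm a b * tperm b c * tperm a b = tperm b c ^ tperm a b.
  by rewrite /conjg -{1}(tpermV a b) mulgA.
have e2 : tperm b c * tperm a b * tperm b c = tperm a b ^ tperm b c.
  by rewrite /conjg -{1}(tpermV b c) mulgA.
rewrite e1 e2 !tpermJ tpermR tpermL (tpermD ac) // (@tpermD _ b c a) //;
  by rewrite eq_sym.
Qed.

Lemma tau_fix n' i (x : 'I_n'.+1) : x != inord i.-1 :> 'I_n'.+1 -> x != inord i :> 'I_n'.+1 ->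
  tau n'.+1 i x = x.
Proof. by move=> h1 h2 /=; rewrite tpermD // eq_sym. Qed.

Lemma tau_comm n i j : 0 < i < n -> 0 < j < n -> far i j ->
  tau n i * tau n j = tau n j * tau n i.
Proof.
case: n => [|n] //= /andP[i0 iN] /andP[j0 jN] hf.
rewrite conjgC; congr (_ * _).
rewrite tpermJ; congr tperm; apply: tpermD; apply: inord_neq; move: hf; rewrite /far; lia.
Qed.

Definition ev (gT : finGroupType) (f : gen -> gT) (w : word) : gT :=
  foldr (fun l acc => (if l.2 then (f l.1)^-1 else f l.1) * acc) 1 w.

Section Ev.
Variables (gT : finGroupType) (f : gen -> gT).

Lemma ev_cat u v : ev f (u ++ v) = ev f u * ev f v.
Proof. by elim: u => [|l u IH] /=; rewrite ?mul1g // IH mulgA. Qed.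

Lemma ev_winv w : ev f (winv w) = (ev f w)^-1.
Proof.
elim: w => [|[g b] w IH] /=; first by rewrite invg1.
rewrite /winv /= rev_cons -cats1 ev_cat -/(winv w) IH invMg /= mulg1.
by case: b => //=; rewrite invgK.
Qed.

Definition good n := forall u v, vbrel n u v -> ev f u = ev f v.

Lemma ev_wequiv n u v : good n -> wequiv n u v -> ev f u = ev f v.
Proof.
move=> hg; elim => {u v} //.
- by move=> [g [|]] /=; rewrite ?invgK ?mulg1 ?mulVg ?mulgV.
- by move=> u v w _ -> _ ->.
- by move=> u u' v v' _ e1 _ e2; rewrite !ev_cat e1 e2.
Qed.

Lemma ev_prods (S : word -> Prop) w : (forall t, S t -> ev f t = 1) -> prods S w -> ev f w = 1.
Proof.
move=> hS; elim => {w}.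
- by [].
- by move=> w /hS.
- by move=> w /hS; rewrite ev_winv => ->; rewrite invg1.
- by move=> u v _ e1 _ e2; rewrite ev_cat e1 e2 mulg1.
Qed.

Lemma ev_sub n (S : word -> Prop) w : good n -> (forall t, S t -> ev f t = 1) ->
  subgroup_gen n S w -> ev f w = 1.
Proof.
move=> hg hS [_ [w' [hp he]]]; rewrite (ev_wequiv hg he); exact: ev_prods hp.
Qed.

Lemma ev_nc n (S : word -> Prop) w : good n -> (forall t, S t -> ev f t = 1) ->
  normal_closure n S w -> ev f w = 1.
Proof.
move=> hg hS; apply: ev_sub => // t [c [t' [_ [/hS h ->]]]].
by rewrite !ev_cat h ev_winv mul1g mulgV.
Qed.
End Ev.

Definition f1 n (g : gen) : 'S_n := tau n (gidx g).
Definition f2 n (g : gen) : 'S_n := if g is Rho i then tau n i else 1.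

Lemma good_f1 n : good (f1 n) n.
Proof.
move=> u v []; clear u v; rewrite /ev /= /f1 /=; intros;
  rewrite ?mulg1 ?mulgA ?tau_braid ?tauK //; exact: tau_comm.
Qed.

Lemma good_f2 n : good (f2 n) n.
Proof.
move=> u v []; clear u v; rewrite /ev /= /f2 /=; intros;
  rewrite ?mulg1 ?mul1g ?mulgA ?tau_braid ?tauK //; exact: tau_comm.
Qed.

Lemma chiE n w : chi n w = (ev (f1 n) w * (ev (f2 n) w)^-1, ev (f2 n) w).
Proof.
elim: w => [|[g b] w IH] /=; first by rewrite invg1 mulg1.
rewrite IH /chi_letter /mmul /minv /f1 /f2 /=.
case: g => i; case: b => /=; congr pair;
  rewrite ?invg1 ?mulg1 ?mul1g ?invMg ?invgK ?mulgA //.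
by rewrite mulVg mul1g.
Qed.

Lemma EPE n w : EP n w <-> [/\ valid n w, ev (f1 n) w = 1 & ev (f2 n) w = 1].
Proof.
rewrite /EP chiE /mone; split.
  by case=> hv [] e1 e2; move: e1; rewrite e2 invg1 mulg1.
by case=> hv e1 e2; rewrite e1 e2 invg1 mulg1.
Qed.

Lemma ev_mapr1 n l : ev (f1 n) (map r l) = tprod n l.
Proof. by elim: l => //= k l ->. Qed.
Lemma ev_mapr2 n l : ev (f2 n) (map r l) = tprod n l.
Proof. by elim: l => //= k l ->. Qed.

Lemma tprod_cat n l1 l2 : tprod n (l1 ++ l2) = tprod n l1 * tprod n l2.
Proof. by elim: l1 => [|k l IH] /=; rewrite ?mul1g // IH mulgA. Qed.

Lemma tprod_rev n l : tprod n (rev l) = (tprod n l)^-1.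
Proof.
elim: l => [|k l IH] /=; first by rewrite invg1.
by rewrite rev_cons -cats1 tprod_cat IH /= mulg1 invMg tauV.
Qed.

Definition eps n (w : word) : 'S_n := ev (f1 n) w * (ev (f2 n) w)^-1.

Lemma eps_x n i j : i < j ->
  eps n (x_up i j) = eps_val n i j /\ eps n (x_down i j) = eps_val n i j.
Proof.
move=> hij; rewrite /eps /x_up /x_down /eps_val !ev_cat
  !ev_mapr1 !ev_mapr2 /= /f1 /f2 /= !mulg1 !tprod_rev.
have -> : j - i = (j - i.+1).+1 by lia.
rewrite /=; set P := tprod n _; rewrite !mul1g !mulVg invg1 !mulg1 invMg tauV.
split; first by rewrite mulgA.
by rewrite (mulgA (tau n i)) tauK mul1g.
Qed.

From Stdlib Require Import Setoid Morphisms.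

Add Parametric Relation n : word (wequiv n)
  reflexivity proved by (@we_refl n) symmetry proved by (@we_sym n)
  transitivity proved by (@we_trans n) as wequiv_rel.

Add Parametric Morphism n : (@cat letter) with signature
  wequiv n ==> wequiv n ==> wequiv n as cat_mor.
Proof. move=> *; exact: we_cat. Qed.

Lemma linvK : involutive linv.
Proof. by case=> g b; rewrite /linv /= negbK. Qed.

Lemma winvK : involutive winv.
Proof. by move=> w; rewrite /winv map_rev revK -map_comp; elim: w => //= x w ->; rewrite linvK. Qed.

Lemma winv_cat u v : winv (u ++ v) = winv v ++ winv u.
Proof. by rewrite /winv map_cat rev_cat. Qed.

Lemma winv_cons x w : winv (x :: w) = winv w ++ [:: linv x].
Proof. by rewrite -cat1s winv_cat. Qed.

Lemma we_winvr n w : wequiv n (w ++ winv w) [::].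
Proof.
elim: w => [|x w IH]; first by reflexivity.
rewrite winv_cons.
have -> : (x :: w) ++ (winv w ++ [:: linv x]) = [:: x] ++ ((w ++ winv w) ++ [:: linv x])
  by rewrite /= catA.
rewrite IH /=; exact: we_free.
Qed.

Lemma we_winvl n w : wequiv n (winv w ++ w) [::].
Proof. by rewrite -{2}(winvK w); apply: we_winvr. Qed.

Definition Sc n : word -> Prop := fun w => exists c t, valid n c /\
  (exists i, 0 < i < n /\ t = [:: s i]) /\ w = c ++ t ++ winv c.

Lemma H_E n w : H n w <-> valid n w /\ exists w', prods (Sc n) w' /\ wequiv n w w'.
Proof. by []. Qed.

Definition PH n h := exists h', prods (Sc n) h' /\ wequiv n h h'.

Lemma PH_nil n : PH n [::].
Proof. by exists [::]; split; [constructor | reflexivity]. Qed.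

Lemma PH_cat n u v : PH n u -> PH n v -> PH n (u ++ v).
Proof.
move=> [u' [pu eu]] [v' [pv ev']]; exists (u' ++ v'); split; first exact: pr_cat.
by rewrite eu ev'; reflexivity.
Qed.

Lemma valid_cat n u v : valid n (u ++ v) = valid n u && valid n v.
Proof. exact: all_cat. Qed.

Lemma PH_conj n c h : valid n c -> PH n h -> PH n (c ++ h ++ winv c).
Proof.
move=> hc [h' [ph eh]].
suff [h'' [p2 e2]] : exists h'', prods (Sc n) h'' /\ wequiv n (c ++ h' ++ winv c) h''.
  by exists h''; split => //; rewrite eh.
elim: ph => {h' eh}.
- exists [::]; split; first by constructor.
  by rewrite cat0s; apply: we_winvr.
- move=> w [c' [t [vc' [ht ->]]]].
  exists ((c ++ c') ++ t ++ winv (c ++ c')); split.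
    apply: pr_gen; exists (c ++ c'), t; split => //; by rewrite valid_cat hc.
  by rewrite winv_cat !catA; reflexivity.
- move=> w [c' [t [vc' [ht ->]]]].
  exists (winv ((c ++ c') ++ t ++ winv (c ++ c'))); split.
    apply: pr_inv; exists (c ++ c'), t; split => //; by rewrite valid_cat hc.
  by rewrite !winv_cat !winvK !catA; reflexivity.
- move=> u v _ [hu [pu eu]] _ [hv [pv ev']].
  exists (hu ++ hv); split; first exact: pr_cat.
  rewrite -eu -ev'.
  have -> : (c ++ u ++ winv c) ++ c ++ v ++ winv c = c ++ u ++ (winv c ++ c) ++ v ++ winv c
    by rewrite !catA.
  by rewrite we_winvl /= !catA; reflexivity.
Qed.

Lemma PH_sig n i b : 0 < i < n -> PH n [:: (Sig i, b)].
Proof.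
move=> hi; case: b.
  exists (winv [:: s i]); split; last by reflexivity.
  by apply: pr_inv; exists [::], [:: s i]; split => //; split => //; exists i.
exists [:: s i]; split; last by reflexivity.
by apply: pr_gen; exists [::], [:: s i]; split => //; split => //; exists i.
Qed.

Definition isRho (l : letter) : bool := if l.1 is Rho _ then true else false.
Definition rpart (w : word) : word := filter isRho w.

Lemma claim1 n w : valid n w -> exists h, PH n h /\ wequiv n w (h ++ rpart w).
Proof.
elim: w => [|[g b] w IH] /=.
  by move=> _; exists [::]; split; [exact: PH_nil | reflexivity].
move=> /andP[hl /IH [h [ph eh]]]; case: g hl => i hl /=.
- exists ((Sig i, b) :: h); split; first by rewrite -cat1s; apply: PH_cat => //; apply: PH_sig.
  rewrite -cat1s; apply: we_trans (we_cat (we_refl _ _) eh) _.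
  by rewrite /= ; reflexivity.
- exists ([:: (Rho i, b)] ++ h ++ winv [:: (Rho i, b)]); split.
    by apply: PH_conj => //=; rewrite hl.
  rewrite -cat1s; apply: we_trans (we_cat (we_refl _ _) eh) _.
  set l := (Rho i, b).
  have -> : ([:: l] ++ h ++ winv [:: l]) ++ l :: rpart w =
     ([:: l] ++ h) ++ ((winv [:: l] ++ [:: l]) ++ rpart w) by rewrite /= -!catA.
  rewrite catA; apply: we_cat; first by reflexivity.
  rewrite -{1}(cat0s (rpart w)); apply: we_cat; [symmetry; apply: we_winvl | reflexivity].
Qed.

Lemma far_sym i j : far i j = far j i.
Proof. by rewrite /far orbC. Qed.

Lemma comm_past n k B : 0 < k < n -> all (fun b => (0 < b < n) && far k b) B ->
  wequiv n (map r B ++ [:: r k]) ([:: r k] ++ map r B).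
Proof.
move=> hk; elim: B => [|b B IH] /=; first by reflexivity.
move=> /andP[/andP[hb hf] /IH {}IH].
apply: we_trans (we_cat (we_refl n [:: r b]) IH) _.
apply: (@we_cat n [:: r b; r k] [:: r k; r b] (map r B) (map r B)); last by reflexivity.
apply: we_rel; apply: rel_rcomm => //; by rewrite far_sym.
Qed.

Lemma all_iotaP (P : pred nat) a d : (forall x, a <= x < a + d -> P x) -> all P (iota a d).
Proof. by move=> h; apply/allP => x; rewrite mem_iota; apply: h. Qed.

Lemma coset n m ks : m.+1 <= n -> all (fun k => 0 < k < m.+1) ks ->
  exists vs j, [/\ all (fun k => 0 < k < m) vs, 0 < j <= m.+1 &
    wequiv n (map r ks) (map r (vs ++ rev (iota j (m.+1 - j))))].
Proof.
move=> hmn; elim/last_ind: ks => [|ks k IH].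
  by move=> _; exists [::], m.+1; rewrite subnn /=; split => //; reflexivity.
rewrite all_rcons => /andP[hk /IH [vs [j [hvs hj e]]]].
suff [vs' [j' [h1 h2 h3]]] : exists vs' j', [/\ all (fun k => 0 < k < m) vs', 0 < j' <= m.+1 &
    wequiv n (map r (vs ++ rev (iota j (m.+1 - j))) ++ [:: r k])
      (map r (vs' ++ rev (iota j' (m.+1 - j'))))].
  exists vs', j'; split => //; rewrite map_rcons -cats1; exact: we_trans (we_cat e (we_refl _ _)) h3.
rewrite map_cat -catA.
case: (ltngtP k.+1 j) => hkj.
-
  exists (rcons vs k), j; split => //.
    by rewrite all_rcons hvs andbT; lia.
  rewrite -cats1 !map_cat -!catA; apply: we_cat; first by reflexivity.
  apply: comm_past; first by lia.
  rewrite all_rev; apply: all_iotaP => x hx; rewrite /far; lia.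
-
  case: (ltngtP j k) => hjk; last first.
  + (* j = k *)
    subst k; exists vs, j.+1; split => //; first by lia.
    have -> : m.+1 - j = (m.+1 - j.+1).+1 by lia.
    rewrite /= rev_cons -cats1 !map_cat -!catA; apply: we_cat; first by reflexivity.
    rewrite -[X in wequiv _ _ X]cats0; apply: we_cat; first by reflexivity.
    apply: we_rel; apply: rel_rr; lia.
  + lia.
  +
    exists (rcons vs k.-1), j; split => //.
      by rewrite all_rcons hvs andbT; lia.
    have -> : m.+1 - j = (k.-1 - j) + (m - k).+2 by lia.
    rewrite iotaD.
    have e1 : j + (k.-1 - j) = k.-1 by lia.
    have e2 : k.-1.+1 = k by lia.
    have -> : iota (j + (k.-1 - j)) (m - k).+2 = k.-1 :: k :: iota k.+1 (m - k)
      by rewrite e1 /= e2.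
    set A := iota j _; set B := iota k.+1 _.
    rewrite rev_cat !rev_cons -!cats1 -!catA !map_cat -!catA.
    apply: we_cat; first by reflexivity.
    have hA : wequiv n (map r (rev A) ++ [:: r k]) ([:: r k] ++ map r (rev A)).
      apply: comm_past; first by lia.
      rewrite all_rev; apply: all_iotaP => x hx; rewrite /far; lia.
    have hB : wequiv n (map r (rev B) ++ [:: r k.-1]) ([:: r k.-1] ++ map r (rev B)).
      apply: comm_past; first by lia.
      rewrite all_rev; apply: all_iotaP => x hx; rewrite /far; lia.
    have br : wequiv n ([:: r k] ++ [:: r k.-1] ++ [:: r k]) ([:: r k.-1] ++ [:: r k] ++ [:: r k.-1]).
      have h0 : 0 < k.-1 by lia.
      have h1 : k.-1.+1 < n by lia.
      have := @rel_r3 n k.-1 h0 h1; rewrite e2 => h.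
      symmetry; apply: we_rel; exact: h.
    set X := map r (rev A); set Y := map r (rev B).
    change (wequiv n (Y ++ [:: r k] ++ [:: r k.-1] ++ X ++ [:: r k])
                     ([:: r k.-1] ++ Y ++ [:: r k] ++ [:: r k.-1] ++ X)).
    rewrite hA.
    have -> : Y ++ [:: r k] ++ [:: r k.-1] ++ [:: r k] ++ X =
              Y ++ ([:: r k] ++ [:: r k.-1] ++ [:: r k]) ++ X by rewrite !catA.
    by rewrite br !catA hB; reflexivity.
-
  exists vs, k; split => //; first by lia.
  have -> : m.+1 - k = (m.+1 - j).+1 by lia.
  rewrite /= hkj rev_cons -cats1 !map_cat; reflexivity.
Qed.

Lemma tprod_fix n' m vs : m < n'.+1 -> all (fun k => 0 < k < m) vs ->
  tprod n'.+1 vs (inord m) = inord m.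
Proof.
move=> hm; elim: vs => [|k vs IH] /=; first by rewrite perm1.
move=> /andP[hk /IH {}IH]; rewrite permM tau_fix ?IH //; apply: inord_neq; lia.
Qed.

Lemma tprod_C n' j d : 0 < j -> j + d <= n'.+1 ->
  tprod n'.+1 (rev (iota j d)) (inord (j + d).-1) = inord j.-1.
Proof.
move=> hj; elim: d => [|d IH] hd; first by rewrite addn0 /= perm1.
have -> : iota j d.+1 = iota j d ++ [:: j + d] by rewrite -addn1 iotaD.
rewrite rev_cat /= permM.
have -> : (j + d.+1).-1 = j + d by lia.
rewrite tpermR IH //; lia.
Qed.

Lemma claim2 n' m : m <= n'.+1 -> forall ks, all (fun k => 0 < k < m) ks ->
  tprod n'.+1 ks = 1 -> wequiv n'.+1 (map r ks) [::].
Proof.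
elim: m => [|m IH] hm ks.
  by case: ks => [|k ks] /=; [reflexivity | lia].
move=> hks h1.
have [vs [j [hvs hj e]]] := coset hm hks.
have e' := ev_wequiv (@good_f2 n'.+1) e.
rewrite !ev_mapr2 tprod_cat h1 in e'.
have hfix := tprod_fix hm hvs.
have hC : tprod n'.+1 (rev (iota j (m.+1 - j))) (inord m) = inord j.-1.
  have := @tprod_C n' j (m.+1 - j); have -> : (j + (m.+1 - j)).-1 = m by lia.
  by apply; lia.
have hjm : j = m.+1.
  have := congr1 (fun p : 'S_n'.+1 => p (inord m)) e'.
  rewrite /= perm1 permM hfix hC => /inord_inj; lia.
move: e e'; rewrite hjm subnn /= cats0 mulg1 => e e'.
rewrite e; apply: (IH (ltnW hm)) => //.
Qed.

Lemma rho_norm n u : all isRho u -> valid n u ->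
  wequiv n u (map r [seq gidx l.1 | l <- u]).
Proof.
elim: u => [|[g b] u IH] /=; first by reflexivity.
case: g => i //= /IH {}IH /andP[hi /IH {}IH].
rewrite -cat1s -(cat1s (r i)); apply: we_cat => //.
case: b; last by reflexivity.
have e1 : wequiv n [:: r i; r i] [::] by apply: we_rel; apply: rel_rr.
apply: we_trans (we_cat (we_sym e1) (we_refl _ [:: (Rho i, true)])) _.
rewrite /= -[X in wequiv _ _ X]cats0.
apply: (@we_cat n [:: r i] [:: r i] [:: r i; (Rho i, true)] [::]); first by reflexivity.
exact: (@we_free n (r i)).
Qed.

Lemma Sc_f2 n t : Sc n t -> ev (f2 n) t = 1.
Proof. by move=> [c [t' [_ [[i [_ ->]] ->]]]]; rewrite !ev_cat ev_winv /= !mul1g mulgV. Qed.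

Lemma H_f2 n w : H n w -> ev (f2 n) w = 1.
Proof. move=> hw; apply: (ev_sub (@good_f2 n) (@Sc_f2 n) hw). Qed.

Lemma EP_H n' w : EP n'.+1 w -> H n'.+1 w.
Proof.
move=> /EPE [hv _ h2]; split => //.
have [h [[h' [ph eh]] e]] := claim1 hv.
have hr : all isRho (rpart w) by rewrite /rpart filter_all.
have hvr : valid n'.+1 (rpart w).
  by rewrite /valid all_filter; apply: sub_all hv => x hx; apply/implyP.

have en := rho_norm hr hvr.
set ks := [seq gidx l.1 | l <- rpart w] in en.
have hks : all (fun k => 0 < k < n'.+1) ks.
  by rewrite /ks all_map; apply: sub_all hvr.
have eh2 : ev (f2 n'.+1) h = 1.
  by rewrite (ev_wequiv (@good_f2 _) eh); apply: ev_prods ph; apply: Sc_f2.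
have tk : tprod n'.+1 ks = 1.
  rewrite -ev_mapr2 -(ev_wequiv (@good_f2 _) en).
  move: h2; rewrite (ev_wequiv (@good_f2 _) e) ev_cat eh2 mul1g //.
have := claim2 (leqnn _) hks tk => ez.
exists h'; split => //.
apply: we_trans e _; rewrite en ez cats0; exact: eh.
Qed.

From mathcomp Require Import ssralg zmodp.
Import GRing.Theory.

Section G3.
Variable n' : nat.
Local Notation n := n'.+1.
Definition XT := ('I_n * 'Z_3)%type.
Definition dd (k : 'I_n) : 'Z_3 := ((k : nat)%:R)%R.

Definition psi_fun (p : 'S_n) (x : XT) : XT := (p x.1, x.2).
Definition phi_fun (p : 'S_n) (x : XT) : XT := (p x.1, (x.2 + dd x.1 - dd (p x.1))%R).

Lemma psi_inj p : injective (psi_fun p).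
Proof. by rewrite /psi_fun => -[k a] [k' a'] /= [/perm_inj -> ->]. Qed.
Lemma phi_inj p : injective (phi_fun p).
Proof.
move=> [k a] [k' a'] e.
have e1 : p k = p k' := congr1 fst e.
have e2 : (a + dd k - dd (p k) = a' + dd k' - dd (p k'))%R := congr1 snd e.
have ek := perm_inj e1; subst k'.
by move: e2 => /(congr1 (fun z => z + dd (p k) - dd k)%R); rewrite !subrK !addrK => ->.
Qed.

Definition Psi p : {perm XT} := perm (@psi_inj p).
Definition Fp p : {perm XT} := perm (@phi_inj p).

Lemma PsiE p x : Psi p x = (p x.1, x.2).
Proof. by rewrite permE. Qed.
Lemma FpE p x : Fp p x = (p x.1, (x.2 + dd x.1 - dd (p x.1))%R).
Proof. by rewrite permE. Qed.

Lemma PsiM p q : Psi (p * q) = Psi p * Psi q.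
Proof. by apply/permP => x; rewrite permM !PsiE permM. Qed.
Lemma FpM p q : Fp (p * q) = Fp p * Fp q.
Proof. by apply/permP => x; rewrite permM !FpE permM /= subrK. Qed.
Lemma Psi1 : Psi 1 = 1.
Proof. by apply/permP => -[k a]; rewrite PsiE !perm1. Qed.
Lemma Fp1 : Fp 1 = 1.
Proof. by apply/permP => -[k a]; rewrite FpE !perm1 /= addrK. Qed.
Lemma PsiV p : Psi p^-1 = (Psi p)^-1.
Proof. by apply/eqP; rewrite eq_sym eq_invg_mul -PsiM mulgV Psi1. Qed.
End G3.

Lemma tau_supp n' i (k : 'I_n'.+1) : tau n'.+1 i k != k ->
  k = inord i.-1 \/ k = inord i.
Proof.
move=> h; case: (k =P inord i.-1) => [|h1]; first by left.
case: (k =P inord i) => [|h2]; first by right.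
by move: h; rewrite tau_fix ?eqxx //; apply/eqP.
Qed.

Lemma sr_comm n' i j : 0 < i < n'.+1 -> 0 < j < n'.+1 -> far i j ->
  Psi (tau n'.+1 i) * Fp (tau n'.+1 j) = Fp (tau n'.+1 j) * Psi (tau n'.+1 i).
Proof.
move=> hi hj hf; have hc := tau_comm hi hj hf.
apply/permP => -[k a]; rewrite !permM PsiE FpE FpE PsiE; cbn [fst snd].
have e : tau n'.+1 j (tau n'.+1 i k) = tau n'.+1 i (tau n'.+1 j k).
  by rewrite -!permM hc.
case: (tau n'.+1 j k =P k) => hk.
  by rewrite e hk !addrK.
have hik : tau n'.+1 i k = k.
  have [->|->] := tau_supp (introN eqP hk); apply: tau_fix; apply: inord_neq;
    move: hf; rewrite /far; lia.
by rewrite hik in e *; rewrite -e.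
Qed.

Lemma dS (x : nat) : ((x.+1)%:R - x%:R = 1 :> 'Z_3)%R.
Proof. by rewrite -(addn1 x) natrD addrAC subrr add0r. Qed.

Lemma ddE n' x : x < n'.+1 -> dd (inord x : 'I_n'.+1) = (x%:R)%R.
Proof. by move=> hx; rewrite /dd inordK. Qed.

Lemma tpermE (T : finType) (x y z : T) :
  tperm x y z = if z == x then y else if z == y then x else z.
Proof.
case: tpermP => [->|->|/eqP/negbTE -> /eqP/negbTE ->]; rewrite ?eqxx //.
by case: eqP => // ->.
Qed.

Lemma mixed3 n' i : 0 < i -> i.+1 < n'.+1 ->
  Fp (tau n'.+1 i) * Fp (tau n'.+1 i.+1) * Psi (tau n'.+1 i) =
  Psi (tau n'.+1 i.+1) * (Fp (tau n'.+1 i) * Fp (tau n'.+1 i.+1)).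
Proof.
move=> h0 h1; have hb := tau_braid h0 h1.
rewrite -FpM; apply/permP => -[k a]; rewrite !permM FpE PsiE PsiE FpE; cbn [fst snd].
congr pair; first by rewrite -!permM mulgA hb.
rewrite -!permM /=.
set p : 'I_n'.+1 := inord i.-1; set q : 'I_n'.+1 := inord i; set r' : 'I_n'.+1 := inord i.+1.
have pq : p != q by apply: inord_neq; lia.
have pr : p != r' by apply: inord_neq; lia.
have qr : q != r' by apply: inord_neq; lia.
have dq : (dd q - dd p = 1)%R.
  rewrite /p /q !ddE; try lia.
  have e : i = i.-1.+1 by lia.
  by rewrite {1}e dS.
have dr : (dd r' - dd q = 1)%R by rewrite /r' /q !ddE ?dS //; lia.
rewrite !permM.
have qp : q != p by rewrite eq_sym.
have rp : r' != p by rewrite eq_sym.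
have rq : r' != q by rewrite eq_sym.
case: (k =P p) => [->|/eqP hp]; [|case: (k =P q) => [->|/eqP hq];
  [|case: (k =P r') => [->|/eqP hr]]];
  rewrite !tpermE; do 6?rewrite ?eqxx ?(negbTE pq) ?(negbTE pr) ?(negbTE qr) ?(negbTE qp)
    ?(negbTE rp) ?(negbTE rq) ?(negbTE hp) ?(negbTE hq) ?(negbTE hr) /=;
  by rewrite -!addrA ?dq ?dr.
Qed.

Definition f3 n' (g : gen) : {perm XT n'} :=
  match g with Sig i => Psi (tau n'.+1 i) | Rho i => Fp (tau n'.+1 i) end.

Lemma good_f3 n' : good (f3 n') n'.+1.
Proof.
move=> u v []; clear u v; rewrite /ev /= /f3 /=.
- by move=> i h0 h1; rewrite !mulg1 -!PsiM !mulgA tau_braid.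
- by move=> i j hi hj hf; rewrite !mulg1 -!PsiM tau_comm.
- by move=> i h0 h1; rewrite !mulg1 -!FpM !mulgA tau_braid.
- by move=> i j hi hj hf; rewrite !mulg1 -!FpM tau_comm.
- by move=> i hi; rewrite !mulg1 -!FpM tauK Fp1.
- by move=> i j hi hj hf; rewrite !mulg1 sr_comm.
- by move=> i h0 h1; rewrite !mulg1 !mulgA mixed3 // mulgA.
Qed.

Lemma ev_f3_sigma n' b : sigma_word b -> ev (f3 n') b = Psi (bperm n'.+1 b).
Proof.
elim: b => [|[g fl] b IH] /=; first by rewrite Psi1.
case: g => // i /IH ->; rewrite PsiM; case: fl => //=; by rewrite PsiV.
Qed.

Lemma w0_notin n' : 0 < n' ->
  ev (f3 n') [:: s 1; r 1; s 1; r 1] != 1.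
Proof.
move=> hn; apply/eqP => /(congr1 (fun p : {perm XT n'} => p (inord 0, 0%R))).
rewrite /= /f3 mulg1 !permM perm1.
set t := tperm (inord 0) (inord 1).
have t0 : t (inord 0) = inord 1 by rewrite tpermL.
have t1 : t (inord 1) = inord 0 by rewrite tpermR.
have d0 : dd (inord 0 : 'I_n'.+1) = 0%R by rewrite ddE.
have d1 : dd (inord 1 : 'I_n'.+1) = 1%R by rewrite ddE //; lia.
have e1 : Psi t (inord 0, 0%R) = (inord 1, 0%R) by rewrite PsiE /= t0.
have e2 : Fp t (inord 1, 0%R) = (inord 0, 1%R) by rewrite FpE /= t1 d0 d1 add0r subr0.
have e3 : Psi t (inord 0, 1%R) = (inord 1, 1%R) by rewrite PsiE /= t0.
have e4 : Fp t (inord 1, 1%R) = (inord 0, (1 + 1)%R) by rewrite FpE /= t1 d0 d1 subr0.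
rewrite e1 e2 e3 e4 => /(congr1 snd) /=.
by [].
Qed.

Lemma ev_f2_sigma n b : sigma_word b -> ev (f2 n) b = 1.
Proof.
elim: b => [|[g fl] b IH] //=.
case: g => // i /IH ->; case: fl; by rewrite /= ?invg1 mul1g.
Qed.

Theorem proposition7p4 (n : nat) (hn : 2 <= n) :
  exists eps : word -> 'S_n,
    [/\ (forall u v, H n u -> H n v -> wequiv n u v -> eps u = eps v),
        (forall u v, H n u -> H n v -> eps (u ++ v) = (eps u * eps v)%g),
        (forall i j, 1 <= i -> i < j -> j <= n ->
            eps (x_up i j) = eps_val n i j /\ eps (x_down i j) = eps_val n i j),
        subgroup_iso n (EP n) (fun w => H n w /\ eps w = 1%g)
      & (forall w, normal_closure n (Pn n) w -> EP n w) /\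
        (exists w, EP n w /\ ~ normal_closure n (Pn n) w)].
Proof.
case: n hn => [|[|n']] // hn.
exists (eps n'.+2); split.
- move=> u v _ _ e.
  by rewrite /eps (ev_wequiv (@good_f1 _) e) (ev_wequiv (@good_f2 _) e).
- move=> u v hu hv.
  by rewrite /eps !ev_cat (H_f2 hu) (H_f2 hv) !mulg1 !invg1 !mulg1.
- by move=> i j _ hij _; apply: eps_x.
- exists id; split.
  + move=> w hw; split; first exact: EP_H.
    by move/EPE: hw => [_ e1 e2]; rewrite /eps e1 e2 invg1 mulg1.
  + by move=> u v _ _.
  + by move=> u v _ _; reflexivity.
  + by move=> u v _ _.
  + move=> w' [hH he]; exists w'; split; last by reflexivity.
    have e2 := H_f2 hH.
    apply/EPE; split => //; first by case: hH.
    by move: he; rewrite /eps e2 invg1 mulg1.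
- split.
  + move=> w hw; apply/EPE; split.
    * by case: hw.
    * apply: (ev_nc (@good_f1 _) _ hw) => t [_ [b [_ [sb [pb e]]]]].
      by rewrite (ev_wequiv (@good_f1 _) e); exact: pb.
    * apply: (ev_nc (@good_f2 _) _ hw) => t [_ [b [_ [sb [pb e]]]]].
      by rewrite (ev_wequiv (@good_f2 _) e); apply: ev_f2_sigma.
  + exists [:: s 1; r 1; s 1; r 1]; split.
      apply/EPE; split => //.
        by rewrite /ev /f1 /= mulg1 !tperm2 mulg1 tperm2.
      by rewrite /ev /f2 /= ?mul1g ?mulg1 tperm2.
    move=> hnc.
    have h0 : 0 < n'.+1 by [].
    move: (w0_notin h0) => /eqP; apply.
    apply: (ev_nc (@good_f3 n'.+1) _ hnc).
    move=> t [_ [b [_ [sb [pb e]]]]].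
    by rewrite (ev_wequiv (@good_f3 _) e) ev_f3_sigma // pb Psi1.
Qed.
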